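(* For all natural numbers $n \neq m$, the terms $B\,Y_0\,S^{n}\,I$ and $B\,Y_0\,S^{m}\,I$ are not $\beta$-convertible; that is, the Scott sequence $B Y_0 I,\ B Y_0 S I,\ B Y_0 S S I,\ \ldots$ contains no duplicates.
   Context: Untyped $\lambda$-calculus with $\beta$-conversion. $I = \lambda x.x$, $S = \lambda xyz.\,xz(yz)$, $B = \lambda xyz.\,x(yz)$, and $Y_0 = \lambda f.\,\omega_f\,\omega_f$ with $\omega_f = \lambda x.\,f(xx)$. $A\,C^n$ denotes the left-associated application $A C\cdots C$ with $n$ copies of $C$. *)

(* Defs.v *)
From Stdlib Require Import Arith Relations.

Inductive term : Type :=
| Var : nat -> term
| App : term -> term -> term
| Lam : term -> term.

Fixpoint lift (k c : nat) (t : term) : term :=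
  match t with
  | Var n => if Nat.ltb n c then Var n else Var (n + k)
  | App u v => App (lift k c u) (lift k c v)
  | Lam u => Lam (lift k (S c) u)
  end.

Fixpoint subst (j : nat) (s : term) (t : term) : term :=
  match t with
  | Var n =>
      if Nat.ltb n j then Var n
      else if Nat.eqb n j then lift j 0 s
      else Var (n - 1)
  | App u v => App (subst j s u) (subst j s v)
  | Lam u => Lam (subst (S j) s u)
  end.

Inductive beta : term -> term -> Prop :=
| beta_redex : forall t s, beta (App (Lam t) s) (subst 0 s t)
| beta_appl : forall u u' v, beta u u' -> beta (App u v) (App u' v)
| beta_appr : forall u v v', beta v v' -> beta (App u v) (App u v')
| beta_lam : forall u u', beta u u' -> beta (Lam u) (Lam u').

Definition beta_conv : term -> term -> Prop := clos_refl_sym_trans term beta.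

(* Combinators (de Bruijn: index 0 = innermost binder) *)
Definition I : term := Lam (Var 0).
(* S = \x y z. x z (y z) *)
Definition S : term := Lam (Lam (Lam (App (App (Var 2) (Var 0)) (App (Var 1) (Var 0))))).
(* B = \x y z. x (y z) *)
Definition B : term := Lam (Lam (Lam (App (Var 2) (App (Var 1) (Var 0))))).
(* omega_f = \x. f (x x), with f the enclosing binder; Y0 = \f. omega_f omega_f *)
Definition omega_f : term := Lam (App (Var 1) (App (Var 0) (Var 0))).
Definition Y0 : term := Lam (App omega_f omega_f).

Fixpoint app_iter (A C : term) (n : nat) : term :=
  match n with
  | O => A
  | Datatypes.S k => App (app_iter A C k) C
  end.

Definition scott (n : nat) : term := App (app_iter (App B Y0) S n) I.

(* Main.v *)
Require Import Defs.
From Stdlib Require Import Arith Lia Relations List.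
Import ListNotations.


Notation succ := Datatypes.S.

Lemma lift_0 : forall t c, lift 0 c t = t.
Proof.
  induction t; intros c; simpl; try (rewrite ?IHt, ?IHt1, ?IHt2; reflexivity).
  destruct (Nat.ltb n c); f_equal; lia.
Qed.

Lemma lift_lift_comm : forall t k c k' c', c <= c' ->
  lift k c (lift k' c' t) = lift k' (c' + k) (lift k c t).
Proof.
  induction t; intros k c k' c' H; simpl.
  - destruct (Nat.ltb n c') eqn:E1; destruct (Nat.ltb n c) eqn:E2; simpl;
    rewrite ?E1, ?E2;
    repeat match goal with
    | |- context [Nat.ltb ?a ?b] => destruct (Nat.ltb a b) eqn:?
    end;
    repeat match goal with H: (_ <? _) = _ |- _ => first [apply Nat.ltb_lt in H | apply Nat.ltb_ge in H] end;
    f_equal; lia.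
  - rewrite IHt1, IHt2; auto.
  - rewrite IHt by lia. f_equal.
Qed.

Ltac ltb_solve :=
  repeat match goal with
  | |- context [Nat.ltb ?a ?b] => destruct (Nat.ltb a b) eqn:?
  | |- context [Nat.eqb ?a ?b] => destruct (Nat.eqb a b) eqn:?
  end;
  repeat match goal with
  | H: (_ <? _) = true |- _ => apply Nat.ltb_lt in H
  | H: (_ <? _) = false |- _ => apply Nat.ltb_ge in H
  | H: (_ =? _) = true |- _ => apply Nat.eqb_eq in H
  | H: (_ =? _) = false |- _ => apply Nat.eqb_neq in H
  end.

Lemma lift_lift_merge : forall t k c k' c', c' <= c -> c <= c' + k' ->
  lift k c (lift k' c' t) = lift (k + k') c' t.
Proof.
  induction t; intros k c k' c' H1 H2; simpl.
  - ltb_solve; simpl; ltb_solve; f_equal; lia.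
  - rewrite IHt1, IHt2; auto.
  - rewrite IHt by lia. reflexivity.
Qed.

Lemma lift_subst : forall t k j n s,
  lift k (j + n) (subst n s t) = subst n (lift k j s) (lift k (j + n + 1) t).
Proof.
  induction t; intros k j m s; simpl.
  - ltb_solve; simpl; ltb_solve; try (f_equal; lia); try lia.
    + subst. rewrite (lift_lift_comm s m 0 k j) by lia. f_equal; lia.
  - rewrite IHt1, IHt2; auto.
  - f_equal. replace (succ (j + m)) with (j + succ m) by lia.
    rewrite IHt. f_equal. f_equal. lia.
Qed.

Lemma lift_subst2 : forall t k c j s, c <= j ->
  lift k c (subst j s t) = subst (j + k) s (lift k c t).
Proof.
  induction t; intros k c j s H; simpl.
  - ltb_solve; simpl; ltb_solve; try (f_equal; lia); try lia.
    + subst. rewrite lift_lift_merge by lia. f_equal; lia.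
  - rewrite IHt1, IHt2; auto.
  - f_equal. rewrite IHt by lia. reflexivity.
Qed.

Lemma subst_lift_cancel : forall s n w p c, c <= n -> n <= c + p ->
  subst n w (lift (succ p) c s) = lift p c s.
Proof.
  induction s; intros m w p c H1 H2; simpl.
  - ltb_solve; simpl; ltb_solve; try (f_equal; lia); try lia.
  - rewrite IHs1, IHs2; auto.
  - f_equal. apply IHs; lia.
Qed.

Lemma subst_subst : forall b j n s u,
  subst (j + n) s (subst n u b) = subst n (subst j s u) (subst (j + n + 1) s b).
Proof.
  induction b; intros j m s u; simpl.
  - ltb_solve; simpl; ltb_solve; try (f_equal; lia); try lia.
    + rewrite (lift_subst2 u) by lia. reflexivity.
    + replace (j + m + 1) with (succ (j + m)) by lia.
      rewrite subst_lift_cancel by lia. reflexivity.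
  - rewrite IHb1, IHb2; auto.
  - f_equal. replace (succ (j + m)) with (j + succ m) by lia.
    rewrite IHb. f_equal. f_equal. lia.
Qed.

Inductive par : term -> term -> Prop :=
| par_var n : par (Var n) (Var n)
| par_app u u' v v' : par u u' -> par v v' -> par (App u v) (App u' v')
| par_lam u u' : par u u' -> par (Lam u) (Lam u')
| par_beta t t' s s' : par t t' -> par s s' -> par (App (Lam t) s) (subst 0 s' t').

Lemma par_refl : forall t, par t t.
Proof. induction t; constructor; auto. Qed.

Lemma par_lift : forall t t', par t t' -> forall k c, par (lift k c t) (lift k c t').
Proof.
  induction 1; intros k c; simpl.
  - apply par_refl.
  - constructor; auto.
  - constructor; auto.
  - pose proof (lift_subst t' k c 0 s') as E. rewrite !Nat.add_0_r in E.
    rewrite E. replace (c+1) with (succ c) by lia. constructor; auto.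
Qed.

Lemma par_subst : forall t t', par t t' -> forall s s', par s s' -> forall j,
  par (subst j s t) (subst j s' t').
Proof.
  induction 1; intros s0 s0' Hs j; simpl.
  - ltb_solve; try constructor. apply par_lift; auto.
  - constructor; auto.
  - constructor; auto.
  - pose proof (subst_subst t' j 0 s0' s') as E. rewrite !Nat.add_0_r in E.
    rewrite E. replace (j+1) with (succ j) by lia. constructor; auto.
Qed.

Fixpoint rho (t : term) : term :=
  match t with
  | Var n => Var n
  | Lam u => Lam (rho u)
  | App (Lam u) v => subst 0 (rho v) (rho u)
  | App u v => App (rho u) (rho v)
  end.

Lemma par_rho : forall t t', par t t' -> par t' (rho t).
Proof.
  induction 1; simpl.
  - constructor.
  - destruct u; try (constructor; auto).
    inversion H; subst. inversion IHpar1; subst. constructor; auto.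
  - constructor; auto.
  - apply par_subst; auto.
Qed.

Lemma strip : forall t t2, clos_refl_trans_1n _ par t t2 -> forall t1, par t t1 ->
  exists v, clos_refl_trans_1n _ par t1 v /\ par t2 v.
Proof.
  induction 1; intros t1 H1.
  - exists t1. split; [constructor | auto].
  - destruct (IHclos_refl_trans_1n (rho x)) as [v [Hv1 Hv2]].
    + apply par_rho; auto.
    + exists v. split; auto. econstructor. apply par_rho; eauto. auto.
Qed.

Lemma par_confl : forall t t1, clos_refl_trans_1n _ par t t1 -> forall t2, clos_refl_trans_1n _ par t t2 ->
  exists v, clos_refl_trans_1n _ par t1 v /\ clos_refl_trans_1n _ par t2 v.
Proof.
  induction 1; intros t2 H2.
  - exists t2. split; auto. constructor.
  - destruct (strip _ _ H2 _ H) as [v' [Hv1 Hv2]].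
    destruct (IHclos_refl_trans_1n _ Hv1) as [v [Ha Hb]].
    exists v. split; auto. econstructor; eauto.
Qed.

Definition red := clos_refl_trans term beta.

Lemma red_app : forall u u' v v', red u u' -> red v v' -> red (App u v) (App u' v').
Proof.
  intros u u' v v' H1 H2. apply rt_trans with (App u' v).
  - induction H1; [apply rt_step; constructor; auto | apply rt_refl | eapply rt_trans; eauto].
  - induction H2; [apply rt_step; constructor; auto | apply rt_refl | eapply rt_trans; eauto].
Qed.

Lemma red_lam : forall u u', red u u' -> red (Lam u) (Lam u').
Proof.
  induction 1; [apply rt_step; constructor; auto | apply rt_refl | eapply rt_trans; eauto].
Qed.

Lemma beta_par : forall t u, beta t u -> par t u.
Proof. induction 1; constructor; auto using par_refl. Qed.

Lemma par_red : forall t u, par t u -> red t u.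
Proof.
  induction 1.
  - apply rt_refl.
  - apply red_app; auto.
  - apply red_lam; auto.
  - eapply rt_trans. apply red_app. apply red_lam. eauto. eauto.
    apply rt_step. constructor.
Qed.

Lemma red_parstar : forall t u, red t u -> clos_refl_trans_1n _ par t u.
Proof.
  intros t u H. apply clos_rt_rt1n in H. induction H; [constructor|].
  econstructor; eauto. apply beta_par; auto.
Qed.

Lemma parstar_red : forall t u, clos_refl_trans_1n _ par t u -> red t u.
Proof.
  induction 1; [apply rt_refl|]. eapply rt_trans; eauto. apply par_red; auto.
Qed.

Lemma confluence : forall t t1 t2, red t t1 -> red t t2 -> exists v, red t1 v /\ red t2 v.
Proof.
  intros t t1 t2 H1 H2.
  destruct (par_confl _ _ (red_parstar _ _ H1) _ (red_parstar _ _ H2)) as [v [A B]].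
  exists v; split; apply parstar_red; auto.
Qed.

Lemma church_rosser : forall t u, beta_conv t u -> exists v, red t v /\ red u v.
Proof.
  induction 1.
  - exists y. split; [apply rt_step; auto | apply rt_refl].
  - exists x. split; apply rt_refl.
  - destruct IHclos_refl_sym_trans as [v [A B]]. exists v; auto.
  - destruct IHclos_refl_sym_trans1 as [v1 [A1 B1]].
    destruct IHclos_refl_sym_trans2 as [v2 [A2 B2]].
    destruct (confluence _ _ _ B1 A2) as [w [C D]].
    exists w. split; eapply rt_trans; eauto.
Qed.


Inductive kind := KAt (r : nat) | KKn (j : nat) | KMu.
Definition ctx := list kind.

Inductive At (G : ctx) : nat -> term -> Prop :=
| at_S : forall r, 2 <= r -> At G r S
| at_I : At G 1 I
| at_var : forall i r, nth_error G i = Some (KAt r) -> At G r (Var i).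

Inductive Kn (N : nat) : ctx -> nat -> term -> Prop :=
| k_var : forall G i j, nth_error G i = Some (KKn j) -> Kn N G j (Var i)
| k_knot : forall G X Y, Tm N G X -> Tm N G Y -> Kn N G N (App X Y)
| k_app : forall G j M a, Kn N G (succ j) M -> At G j a -> Kn N G j (App M a)
| k_spine : forall G j h a K, At G (succ j) h -> At G j a -> Kn N G j K ->
    Kn N G j (App (App h a) K)
| k_lam : forall G j B, Kn N (KAt j :: G) j B -> Kn N G (succ j) (Lam B)
| k_fn : forall G j B K, Kn N (KKn j :: G) j B -> Kn N G j K -> Kn N G j (App (Lam B) K)
| k_out : forall G a Y, At G 0 a -> Kn N G 0 Y -> Kn N G 0 (App a Y)
with Tm (N : nat) : ctx -> term -> Prop :=
| t_var : forall G i, nth_error G i = Some KMu -> Tm N G (Var i)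
| t_lam : forall G B, Kn N (KMu :: G) N B -> Tm N G (Lam B).

Scheme Kn_ind2 := Induction for Kn Sort Prop
with Tm_ind2 := Induction for Tm Sort Prop.
Combined Scheme Kn_Tm_ind from Kn_ind2, Tm_ind2.

Lemma nth_lift : forall (G1 D G2 : ctx) i k,
  nth_error (G1 ++ G2) i = Some k ->
  nth_error (G1 ++ D ++ G2) (if Nat.ltb i (length G1) then i else i + length D) = Some k.
Proof.
  intros G1 D G2 i k H. destruct (Nat.ltb i (length G1)) eqn:E.
  - apply Nat.ltb_lt in E. rewrite nth_error_app1 in * by auto. auto.
  - apply Nat.ltb_ge in E. rewrite nth_error_app2 in * by auto.
    rewrite nth_error_app2 by lia. rewrite nth_error_app2 by lia.
    replace (i + length D - length G1 - length D) with (i - length G1) by lia. auto.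
Qed.

Lemma At_lift : forall G1 G2 D r t, At (G1 ++ G2) r t ->
  At (G1 ++ D ++ G2) r (lift (length D) (length G1) t).
Proof.
  intros G1 G2 D r t H. inversion H; subst; simpl.
  - constructor; auto.
  - constructor.
  - pose proof (nth_lift G1 D G2 i _ H0) as H1.
    destruct (Nat.ltb i (length G1)); constructor; auto.
Qed.

Lemma Kn_Tm_lift : forall N,
  (forall G j t, Kn N G j t -> forall G1 G2 D, G = G1 ++ G2 ->
     Kn N (G1 ++ D ++ G2) j (lift (length D) (length G1) t)) /\
  (forall G t, Tm N G t -> forall G1 G2 D, G = G1 ++ G2 ->
     Tm N (G1 ++ D ++ G2) (lift (length D) (length G1) t)).
Proof.
  intro N. apply Kn_Tm_ind; intros; subst; simpl.
  - pose proof (nth_lift G1 D G2 i _ e) as H1.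
    destruct (Nat.ltb i (length G1)); constructor; auto.
  - apply k_knot; auto.
  - apply k_app; auto. apply At_lift; auto.
  - apply k_spine; auto; apply At_lift; auto.
  - apply k_lam. apply (H (KAt j :: G1)); auto.
  - apply k_fn; auto. apply (H (KKn j :: G1)); auto.
  - apply k_out; auto. apply At_lift; auto.
  - pose proof (nth_lift G1 D G2 i _ e) as H1.
    destruct (Nat.ltb i (length G1)); constructor; auto.
  - constructor. apply (H (KMu :: G1)); auto.
Qed.

Lemma Kn_weak : forall N G D j t, Kn N G j t -> Kn N (D ++ G) j (lift (length D) 0 t).
Proof. intros. apply (proj1 (Kn_Tm_lift N) G j t H [] G D); auto. Qed.
Lemma Tm_weak : forall N G D t, Tm N G t -> Tm N (D ++ G) (lift (length D) 0 t).
Proof. intros. apply (proj2 (Kn_Tm_lift N) G t H [] G D); auto. Qed.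
Lemma At_weak : forall G D r t, At G r t -> At (D ++ G) r (lift (length D) 0 t).
Proof. intros. apply (At_lift [] G D); auto. Qed.

Definition Judge (N : nat) (G : ctx) (k : kind) (s : term) : Prop :=
  match k with
  | KAt r => At G r s
  | KKn j => Kn N G j s
  | KMu => Tm N G s
  end.

Lemma Judge_weak : forall N G D k s, Judge N G k s -> Judge N (D ++ G) k (lift (length D) 0 s).
Proof. intros N G D [r|j|] s H; simpl in *; auto using Kn_weak, Tm_weak, At_weak. Qed.

Lemma nth_subst : forall (G1 G2 : ctx) k i k',
  nth_error (G1 ++ k :: G2) i = Some k' ->
  (i < length G1 /\ nth_error (G1 ++ G2) i = Some k') \/
  (i = length G1 /\ k' = k) \/
  (i > length G1 /\ nth_error (G1 ++ G2) (i - 1) = Some k').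
Proof.
  intros G1 G2 k i k' H. destruct (lt_eq_lt_dec i (length G1)) as [[H1|H1]|H1].
  - left. rewrite nth_error_app1 in * by auto. auto.
  - right; left. subst. rewrite nth_error_app2 in H by lia.
    rewrite Nat.sub_diag in H. simpl in H. inversion H; auto.
  - right; right. split; auto. rewrite nth_error_app2 in * by lia.
    replace (i - length G1) with (succ (i - 1 - length G1)) in H by lia. simpl in H. auto.
Qed.

Ltac subst_var_case :=
  match goal with
  | H : nth_error (?G1 ++ ?k :: ?G2) ?i = Some ?k' |- _ =>
    destruct (nth_subst G1 G2 k i k' H) as [[Hl He]|[[Hl He]|[Hl He]]]
  end.

Lemma At_subst : forall G1 k G2 r t s N, At (G1 ++ k :: G2) r t -> Judge N G2 k s ->
  At (G1 ++ G2) r (subst (length G1) s t).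
Proof.
  intros G1 k G2 r t s N H Hs. inversion H; subst; simpl.
  - constructor; auto.
  - constructor.
  - subst_var_case.
    + assert (E: Nat.ltb i (length G1) = true) by (apply Nat.ltb_lt; auto).
      rewrite E. constructor; auto.
    + subst. rewrite Nat.ltb_irrefl, Nat.eqb_refl.
      apply (Judge_weak N G2 G1) in Hs. simpl in Hs. auto.
    + assert (E: Nat.ltb i (length G1) = false) by (apply Nat.ltb_ge; lia).
      assert (E2: Nat.eqb i (length G1) = false) by (apply Nat.eqb_neq; lia).
      rewrite E, E2. constructor; auto.
Qed.

Lemma Kn_Tm_subst : forall N,
  (forall G j t, Kn N G j t -> forall G1 k G2 s, G = G1 ++ k :: G2 -> Judge N G2 k s ->
     Kn N (G1 ++ G2) j (subst (length G1) s t)) /\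
  (forall G t, Tm N G t -> forall G1 k G2 s, G = G1 ++ k :: G2 -> Judge N G2 k s ->
     Tm N (G1 ++ G2) (subst (length G1) s t)).
Proof.
  intro N. apply Kn_Tm_ind; intros; subst; simpl.
  - subst_var_case.
    + assert (E: Nat.ltb i (length G1) = true) by (apply Nat.ltb_lt; auto).
      rewrite E. constructor; auto.
    + subst. rewrite Nat.ltb_irrefl, Nat.eqb_refl.
      apply (Judge_weak N G2 G1) in H0. simpl in H0. auto.
    + assert (E: Nat.ltb i (length G1) = false) by (apply Nat.ltb_ge; lia).
      assert (E2: Nat.eqb i (length G1) = false) by (apply Nat.eqb_neq; lia).
      rewrite E, E2. constructor; auto.
  - apply k_knot; eauto.
  - apply k_app; eauto. eapply At_subst; eauto.
  - apply k_spine; eauto; eapply At_subst; eauto.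
  - apply k_lam. eapply (H (KAt j :: G1)); [reflexivity | eauto].
  - apply k_fn; eauto. eapply (H (KKn j :: G1)); [reflexivity | eauto].
  - apply k_out; eauto. eapply At_subst; eauto.
  - subst_var_case.
    + assert (E: Nat.ltb i (length G1) = true) by (apply Nat.ltb_lt; auto).
      rewrite E. constructor; auto.
    + subst. rewrite Nat.ltb_irrefl, Nat.eqb_refl.
      apply (Judge_weak N G2 G1) in H0. simpl in H0. auto.
    + assert (E: Nat.ltb i (length G1) = false) by (apply Nat.ltb_ge; lia).
      assert (E2: Nat.eqb i (length G1) = false) by (apply Nat.eqb_neq; lia).
      rewrite E, E2. constructor; auto.
  - constructor. eapply (H (KMu :: G1)); [reflexivity | eauto].
Qed.

Lemma Kn_subst0 : forall N G k s j t, Kn N (k :: G) j t -> Judge N G k s -> Kn N G j (subst 0 s t).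
Proof. intros. apply (proj1 (Kn_Tm_subst N) _ _ _ H [] k G s); auto. Qed.


Ltac beta_inv := repeat match goal with H : beta _ _ |- _ => inversion H; subst; clear H end.

Lemma atom_normal : forall G r t t', At G r t -> beta t t' -> False.
Proof. intros G r t t' H Hb. inversion H; subst; beta_inv. Qed.

Lemma spine_step : forall N G j h a K u, At G (succ j) h -> At G j a -> Kn N G j K ->
  beta (App h a) u -> Kn N G j (App u K).
Proof.
  intros N G j h a K u Hh Ha HK Hb. inversion Hb; subst.
  - inversion Hh; subst.
    + destruct j as [|j']; [lia|]. simpl.
      apply k_fn; auto. apply k_lam.
      apply k_spine.
      * apply (At_weak G [KAt j'; KKn (succ j')]) in Ha. simpl in Ha. exact Ha.
      * apply at_var. reflexivity.
      * apply k_app. apply k_var. reflexivity. apply at_var. reflexivity.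
    + simpl. rewrite lift_0. apply k_out; auto.
  - exfalso. eapply atom_normal; [exact Hh| eassumption].
  - exfalso. eapply atom_normal; [exact Ha| eassumption].
Qed.

Lemma Kn_Tm_beta : forall N,
  (forall G j t, Kn N G j t -> forall t', beta t t' -> Kn N G j t') /\
  (forall G t, Tm N G t -> forall t', beta t t' -> Tm N G t').
Proof.
  intro N. apply Kn_Tm_ind; intros.
  - inversion H.
  - inversion H1; subst.
    + inversion t; subst. eapply Kn_subst0; eauto.
    + apply k_knot; auto.
    + apply k_knot; auto.
  - inversion H0; subst.
    + inversion k; subst. eapply Kn_subst0; eauto.
    + apply k_app; auto.
    + exfalso. eapply atom_normal; eauto.
  - inversion H0; subst.
    + eapply spine_step; eauto.
    + apply k_spine; auto.
  - inversion H0; subst. apply k_lam; auto.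
  - inversion H1; subst.
    + eapply Kn_subst0; eauto.
    + inversion H5; subst. apply k_fn; auto.
    + apply k_fn; auto.
  - inversion H0; subst.
    + match goal with H : At _ 0 (Lam _) |- _ => inversion H; subst; lia end.
    + exfalso. eapply atom_normal; eauto.
    + apply k_out; auto.
  - inversion H.
  - inversion H0; subst. apply t_lam; auto.
Qed.

Lemma Kn_red : forall N G j t t', red t t' -> Kn N G j t -> Kn N G j t'.
Proof.
  intros N G j t t' H. induction H; intros HK; auto.
  eapply (proj1 (Kn_Tm_beta N)); eauto.
Qed.


Definition compat (k1 k2 : kind) : Prop :=
  (k1 = k2 /\ forall j, k1 <> KKn j) \/ (k1 = KMu /\ exists j, k2 = KKn j) \/
  (exists j, k1 = KKn j /\ k2 = KMu).

Definition Rel (G1 G2 : ctx) : Prop :=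
  forall i k1 k2, nth_error G1 i = Some k1 -> nth_error G2 i = Some k2 -> compat k1 k2.

Lemma Rel_cons : forall G1 G2 k1 k2, Rel G1 G2 -> compat k1 k2 -> Rel (k1 :: G1) (k2 :: G2).
Proof.
  intros G1 G2 k1 k2 H Hc [|i] a b H1 H2; simpl in *.
  - inversion H1; inversion H2; subst; auto.
  - eauto.
Qed.

Ltac inv_all := repeat match goal with
 | H: Kn _ _ _ (Lam _) |- _ => inversion H; subst; clear H
 | H: Kn _ _ _ (App _ _) |- _ => inversion H; subst; clear H
 | H: Kn _ _ _ (Var _) |- _ => inversion H; subst; clear H
 | H: Tm _ _ (Lam _) |- _ => inversion H; subst; clear H
 | H: Tm _ _ (App _ _) |- _ => inversion H
 | H: Tm _ _ (Var _) |- _ => inversion H; subst; clear H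
 | H: At _ _ (App _ _) |- _ => inversion H
 | H: At _ _ (Lam _) |- _ => inversion H; subst; clear H
 | H: At _ _ (Var _) |- _ => inversion H; subst; clear H
 | H: nth_error (_ :: _) _ = Some _ |- _ => simpl in H; try (inversion H; subst; clear H)
 end; try lia.

Lemma Kn_S : forall N G j, Kn N G j S -> False.
Proof. intros N G j H. unfold S in H. inv_all. Qed.

Lemma Tm_S : forall N G, Tm N G S -> False.
Proof. intros N G H. unfold S in H. inv_all. Qed.

Lemma Kn_I : forall N G j, Kn N G j I -> False.
Proof. intros N G j H. unfold I in H. inv_all. Qed.

Lemma Tm_I : forall N G, Tm N G I -> False.
Proof. intros N G H. unfold I in H. inv_all. Qed.

Lemma compat_bad : forall G1 G2 i k1 k2, Rel G1 G2 -> nth_error G1 i = Some k1 ->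
  nth_error G2 i = Some k2 -> compat k1 k2.
Proof. intros; eauto. Qed.

Ltac compat_false :=
  match goal with
  | HR : Rel ?G1 ?G2, H1 : nth_error ?G1 ?i = Some _, H2 : nth_error ?G2 ?i = Some _ |- _ =>
    let C := fresh in pose proof (HR _ _ _ H1 H2) as C; unfold compat in C;
    destruct C as [[Ce Cn]|[[Ce [jj Cj]]|[jj [Ce Cj]]]]; try discriminate;
    try (exfalso; subst; eapply Cn; reflexivity)
  end.

Lemma conf_At_Kn : forall G1 r t N G2 j, At G1 r t -> Kn N G2 j t -> Rel G1 G2 -> False.
Proof.
  intros G1 r t N G2 j H1 H2 HR. inversion H1; subst.
  - eapply Kn_S; eauto.
  - eapply Kn_I; eauto.
  - inversion H2; subst. compat_false.
Qed.

Lemma conf_Kn_At : forall N G1 j t G2 r, Kn N G1 j t -> At G2 r t -> Rel G1 G2 -> False.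
Proof.
  intros N G1 j t G2 r H1 H2 HR. inversion H2; subst.
  - eapply Kn_S; eauto.
  - eapply Kn_I; eauto.
  - inversion H1; subst. compat_false.
Qed.

Lemma conf_At_Tm : forall G1 r t N G2, At G1 r t -> Tm N G2 t -> Rel G1 G2 -> False.
Proof.
  intros G1 r t N G2 H1 H2 HR. inversion H1; subst.
  - eapply Tm_S; eauto.
  - eapply Tm_I; eauto.
  - inversion H2; subst. compat_false.
Qed.

Lemma conf_Tm_At : forall N G1 t G2 r, Tm N G1 t -> At G2 r t -> Rel G1 G2 -> False.
Proof.
  intros N G1 t G2 r H1 H2 HR. inversion H2; subst.
  - eapply Tm_S; eauto.
  - eapply Tm_I; eauto.
  - inversion H1; subst. compat_false.
Qed.

Ltac conf_solve :=
  match goal with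
  | H1: At ?G1 _ ?t, H2: Kn _ ?G2 _ ?t, H3: Rel ?G1 ?G2 |- _ =>
      exfalso; exact (conf_At_Kn _ _ _ _ _ _ H1 H2 H3)
  | H1: Kn _ ?G1 _ ?t, H2: At ?G2 _ ?t, H3: Rel ?G1 ?G2 |- _ =>
      exfalso; exact (conf_Kn_At _ _ _ _ _ _ H1 H2 H3)
  | H1: At ?G1 _ ?t, H2: Tm _ ?G2 ?t, H3: Rel ?G1 ?G2 |- _ =>
      exfalso; exact (conf_At_Tm _ _ _ _ _ H1 H2 H3)
  | H1: Tm _ ?G1 ?t, H2: At ?G2 _ ?t, H3: Rel ?G1 ?G2 |- _ =>
      exfalso; exact (conf_Tm_At _ _ _ _ _ H1 H2 H3)
  | H: At _ _ (App _ _) |- _ => inversion H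
  | H: Tm _ _ (App _ _) |- _ => inversion H
  | H: At _ 0 (Lam _) |- _ => inversion H; subst; lia
  end.

Lemma rigid_gen : forall N1,
  (forall G1 j t, Kn N1 G1 j t -> forall N2 G2, Kn N2 G2 j t -> Rel G1 G2 -> N1 = N2) /\
  (forall G1 t, Tm N1 G1 t -> forall B, t = Lam B -> forall N2 G2 k,
      Kn N2 (k :: G2) N1 B -> Rel (KMu :: G1) (k :: G2) -> N1 = N2).
Proof.
  intro N1. apply Kn_Tm_ind; intros.
  - inversion H; subst. compat_false.
  - inversion H1; subst; try conf_solve.
    + reflexivity.
    + eapply H; eauto. apply Rel_cons; auto. unfold compat; eauto.
  - inversion H0; subst; try conf_solve. eapply H; eauto.
  - inversion H0; subst; try conf_solve. eapply H; eauto.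
  - inversion H0; subst. eapply H; eauto. apply Rel_cons; auto.
    unfold compat. left. split; auto. intros jj E; discriminate.
  - inversion H1; subst; try conf_solve.
    + match goal with Ht : Tm _ _ (Lam _) |- _ => inversion Ht; subst end.
      eapply H; eauto. apply Rel_cons; auto. unfold compat; eauto.
    + eapply H0; eauto.
  - inversion H0; subst; try conf_solve. eapply H; eauto.
  - discriminate.
  - injection H0; intros; subst. eapply H; eauto.
Qed.

Lemma rigid : forall N1 N2 t, Kn N1 [] 1 t -> Kn N2 [] 1 t -> N1 = N2.
Proof.
  intros. eapply (proj1 (rigid_gen N1)); eauto.
  intros i k1 k2 Hi. destruct i; discriminate.
Qed.


Definition omSS := Lam (App (App S S) (App (Var 0) (Var 0))).
Definition omSI := Lam (App (App S I) (App (Var 0) (Var 0))).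
Definition omz := Lam (App (App I (Var 1)) (App (Var 0) (Var 0))).

Definition T (n : nat) : term :=
  match n with
  | 0 => Lam (App omz omz)
  | 1 => App omSI omSI
  | succ (succ m) => App (app_iter (App omSS omSS) S m) I
  end.

Lemma stepc : forall t s u, subst 0 s t = u -> red (App (Lam t) s) u.
Proof. intros; subst; apply rt_step; constructor. Qed.

Lemma app_iter_add : forall A C p q, app_iter A C (p + q) = app_iter (app_iter A C p) C q.
Proof.
  intros A C p q. induction q; simpl.
  - rewrite Nat.add_0_r; auto.
  - rewrite Nat.add_succ_r. simpl. rewrite IHq; auto.
Qed.

Lemma red_iter : forall A A' C m, red A A' -> red (app_iter A C m) (app_iter A' C m).
Proof. intros; induction m; simpl; auto. apply red_app; auto. apply rt_refl. Qed.

Lemma rs : forall t, red t t. Proof. intros; apply rt_refl. Qed.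


Lemma scott_T : forall n, red (scott n) (T n).
Proof.
  intros [|[|m]]; unfold scott.
  - simpl. eapply rt_trans. apply red_app. apply stepc. reflexivity. apply rs.
    eapply rt_trans. apply stepc. reflexivity. simpl.
    apply red_lam. apply stepc. reflexivity.
  - simpl. eapply rt_trans. apply red_app. apply red_app. apply stepc. reflexivity. apply rs. apply rs.
    eapply rt_trans. apply red_app. apply stepc. reflexivity. apply rs.
    eapply rt_trans. apply stepc. reflexivity. simpl.
    apply stepc. reflexivity.
  - change (succ (succ m)) with (2 + m). rewrite app_iter_add. unfold T.
    apply red_app; [|apply rs]. apply red_iter.
    eapply rt_trans. apply red_app. apply red_app. apply stepc. reflexivity. apply rs. apply rs.
    eapply rt_trans. apply red_app. apply stepc. reflexivity. apply rs.
    eapply rt_trans. apply stepc. reflexivity. simpl.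
    apply stepc. reflexivity.
Qed.

Lemma iter_Kn : forall N G M m j, 2 <= j -> Kn N G (j + m) M -> Kn N G j (app_iter M S m).
Proof.
  intros N G M m. induction m; intros j Hj H; simpl.
  - rewrite Nat.add_0_r in H; auto.
  - apply k_app. apply IHm. lia. rewrite Nat.add_succ_r in H. auto.
    apply at_S; auto.
Qed.

Lemma T_Kn : forall n, Kn n [] 1 (T n).
Proof.
  intros [|[|m]]; simpl.
  - apply k_lam. apply k_knot; (apply t_lam; apply k_spine;
      [apply at_I | apply at_var; reflexivity | apply k_knot; apply t_var; reflexivity]).
  - apply k_knot; (apply t_lam; apply k_spine;
      [apply at_S; lia | apply at_I | apply k_knot; apply t_var; reflexivity]).
  - apply k_app; [|apply at_I]. apply iter_Kn; [lia|].
    change (2 + m) with (succ (succ m)).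
    apply k_knot; (apply t_lam; apply k_spine;
      [apply at_S; lia | apply at_S; lia | apply k_knot; apply t_var; reflexivity]).
Qed.

Lemma red_conv : forall t u, red t u -> beta_conv t u.
Proof.
  induction 1; [apply rst_step; auto | apply rst_refl | eapply rst_trans; eauto].
Qed.

Theorem corollary6p15 : forall n m : nat, n <> m -> ~ beta_conv (scott n) (scott m).
Proof.
  intros n m Hnm Hc.
  assert (Hc' : beta_conv (T n) (T m)).
  { eapply rst_trans. apply rst_sym. apply red_conv. apply scott_T.
    eapply rst_trans. exact Hc. apply red_conv. apply scott_T. }
  destruct (church_rosser _ _ Hc') as [D [H1 H2]].
  apply Hnm. apply (rigid n m D).
  - exact (Kn_red _ _ _ _ _ H1 (T_Kn n)).
  - exact (Kn_red _ _ _ _ _ H2 (T_Kn m)).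
Qed.
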